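(* Let $X$ be a topological vector space and let $\varphi: X\to\overline{\mathbb{R}}$ be continuous. Then $\varphi$ is linear if and only if $\varphi$ is additive and $\varphi(0)=0$.
   Context: $\overline{\mathbb{R}}=\mathbb{R}\cup\{-\infty,+\infty\}$ with the order topology (a neighborhood base of $+\infty$ is $\{\{y:y>a\}:a\in\mathbb{R}\}$, of $-\infty$ is $\{\{y:y<a\}:a\in\mathbb{R}\}$); continuity of $\varphi$ is ordinary continuity into this space. $\operatorname{epi}\varphi=\{(x,t)\in X\times\mathbb{R}:\varphi(x)\le t\}$, $\operatorname{hypo}\varphi=\{(x,t)\in X\times\mathbb{R}:\varphi(x)\ge t\}$. $\varphi$ is linear if $\operatorname{epi}\varphi$ and $\operatorname{hypo}\varphi$ are convex sets and $\varphi(0)=0$. $\varphi$ is additive if $\operatorname{epi}\varphi+\operatorname{epi}\varphi\subseteq\operatorname{epi}\varphi$ and $\operatorname{hypo}\varphi+\operatorname{hypo}\varphi\subseteq\operatorname{hypo}\varphi$. *)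

(* Defs.v *)
From Stdlib Require Export Reals.
Open Scope R_scope.

Record TVS : Type := {
  vcar :> Type;
  vadd : vcar -> vcar -> vcar;
  vzero : vcar;
  vopp : vcar -> vcar;
  vscal : R -> vcar -> vcar;
  vadd_assoc : forall x y z, vadd x (vadd y z) = vadd (vadd x y) z;
  vadd_comm : forall x y, vadd x y = vadd y x;
  vadd_0 : forall x, vadd x vzero = x;
  vadd_opp : forall x, vadd x (vopp x) = vzero;
  vscal_assoc : forall a b x, vscal a (vscal b x) = vscal (a * b) x;
  vscal_1 : forall x, vscal 1 x = x;
  vscal_distr_v : forall a x y, vscal a (vadd x y) = vadd (vscal a x) (vscal a y);
  vscal_distr_r : forall a b x, vscal (a + b) x = vadd (vscal a x) (vscal b x);
  vopen : (vcar -> Prop) -> Prop;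
  vopen_full : vopen (fun _ => True);
  vopen_inter : forall U W, vopen U -> vopen W -> vopen (fun x => U x /\ W x);
  vopen_union : forall F : (vcar -> Prop) -> Prop,
      (forall U, F U -> vopen U) -> vopen (fun x => exists U, F U /\ U x);
  vadd_cont : forall x y U, vopen U -> U (vadd x y) ->
      exists V1 V2, vopen V1 /\ vopen V2 /\ V1 x /\ V2 y /\
        forall u v, V1 u -> V2 v -> U (vadd u v);
  vscal_cont : forall a x U, vopen U -> U (vscal a x) ->
      exists d W, 0 < d /\ vopen W /\ W x /\
        forall b y, Rabs (b - a) < d -> W y -> U (vscal b y)
}.

Inductive Rbar : Type := Fin (r : R) | PInf | NInf.

Definition Rbar_le (x y : Rbar) : Prop :=
  match x, y with
  | NInf, _ => True
  | _, PInf => True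
  | Fin a, Fin b => a <= b
  | _, _ => False
  end.

Definition Rbar_lt (x y : Rbar) : Prop :=
  match x, y with
  | NInf, NInf => False
  | NInf, _ => True
  | Fin a, Fin b => a < b
  | Fin _, PInf => True
  | _, _ => False
  end.

(* Continuity into Rbar with the order topology: the open rays
   (a,+oo] and [-oo,a) (a real) form a subbasis of that topology,
   so continuity is equivalent to their preimages being open. *)
Definition Rbar_continuous {X : TVS} (phi : X -> Rbar) : Prop :=
  forall a : R,
    vopen X (fun x => Rbar_lt (Fin a) (phi x)) /\
    vopen X (fun x => Rbar_lt (phi x) (Fin a)).

Definition epi {X : TVS} (phi : X -> Rbar) (p : X * R) : Prop :=
  Rbar_le (phi (fst p)) (Fin (snd p)).
Definition hypo {X : TVS} (phi : X -> Rbar) (p : X * R) : Prop :=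
  Rbar_le (Fin (snd p)) (phi (fst p)).

Definition convex {X : TVS} (S : X * R -> Prop) : Prop :=
  forall x1 t1 x2 t2 l, S (x1, t1) -> S (x2, t2) -> 0 <= l <= 1 ->
    S (vadd X (vscal X l x1) (vscal X (1 - l) x2), l * t1 + (1 - l) * t2).

Definition add_closed {X : TVS} (S : X * R -> Prop) : Prop :=
  forall x1 t1 x2 t2, S (x1, t1) -> S (x2, t2) -> S (vadd X x1 x2, t1 + t2).

Definition Rbar_linear {X : TVS} (phi : X -> Rbar) : Prop :=
  convex (epi phi) /\ convex (hypo phi) /\ phi (vzero X) = Fin 0.

Definition Rbar_additive {X : TVS} (phi : X -> Rbar) : Prop :=
  add_closed (epi phi) /\ add_closed (hypo phi).

(* Main.v *)
Require Import Defs.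
From Stdlib Require Import Reals Lra Lia Classical FunctionalExtensionality PropExtensionality.
Open Scope R_scope.

Section S.
Variable X : TVS.

Lemma vadd_idem (u : X) : vadd X u u = u -> u = vzero X.
Proof.
  intros H. rewrite <- (vadd_opp X u). rewrite <- H at 2.
  rewrite <- vadd_assoc, vadd_opp, vadd_0. reflexivity.
Qed.

Lemma vscal_0v (a : R) : vscal X a (vzero X) = vzero X.
Proof.
  apply vadd_idem. rewrite <- vscal_distr_v, vadd_0. reflexivity.
Qed.

Lemma vscal_0r (x : X) : vscal X 0 x = vzero X.
Proof.
  apply vadd_idem. rewrite <- vscal_distr_r. f_equal. ring.
Qed.

Lemma nat_closed (P : X * R -> Prop) : add_closed P -> forall x t,
  P (x, t) -> forall k, P (vscal X (INR (S k)) x, INR (S k) * t).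
Proof.
  intros HS x t Ht k. induction k.
  - simpl. rewrite vscal_1. replace (1 * t) with t by ring. exact Ht.
  - rewrite S_INR, vscal_distr_r, vscal_1.
    replace ((INR (S k) + 1) * t) with (INR (S k) * t + t) by ring.
    apply HS; assumption.
Qed.
End S.

Lemma Rbar_not_le a b : ~ Rbar_le a b -> Rbar_lt b a.
Proof. destruct a, b; simpl; try tauto; intros; lra. Qed.

Lemma Rbar_le_lt_false a b : Rbar_le a b -> Rbar_lt b a -> False.
Proof. destruct a, b; simpl; try tauto; intros; lra. Qed.

Lemma lin_add (X : TVS) (phi : X -> Rbar) :
  convex (epi phi) -> convex (Defs.hypo phi) -> phi (vzero X) = Fin 0 ->
  add_closed (epi phi).
Proof.
  intros HE HH H0 x1 t1 x2 t2 E1 E2.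
  apply NNPP; intro N. apply Rbar_not_le in N. unfold epi in N; simpl in N.
  assert (Hr : exists r, t1 + t2 < r /\ Defs.hypo phi (vadd X x1 x2, r)).
  { unfold Defs.hypo; simpl. destruct (phi (vadd X x1 x2)) eqn:E; simpl in N |- *.
    - exists r. split; simpl; lra.
    - exists (t1 + t2 + 1). split; [lra | exact I].
    - contradiction. }
  destruct Hr as [r [Hr Hh]].
  assert (Hz : Defs.hypo phi (vzero X, 0)) by (unfold Defs.hypo; simpl; rewrite H0; simpl; lra).
  assert (A := HH _ _ _ _ (/2) Hh Hz ltac:(lra)).
  assert (B := HE _ _ _ _ (/2) E1 E2 ltac:(lra)).
  unfold Defs.hypo, epi in A, B; simpl in A, B.
  rewrite vscal_0v, vadd_0, vscal_distr_v in A.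
  replace (1 - /2) with (/2) in A, B by lra.
  destruct (phi (vadd X (vscal X (/ 2) x1) (vscal X (/ 2) x2))); simpl in A, B; try tauto; lra.
Qed.

Lemma epi_div (X : TVS) (phi : X -> Rbar) : add_closed (Defs.hypo phi) ->
  forall y s n, epi phi (y, s) ->
  epi phi (vscal X (/ INR (S n)) y, / INR (S n) * s).
Proof.
  intros HH y s n Hy. apply NNPP; intro N. apply Rbar_not_le in N.
  assert (HN : 0 < INR (S n)) by (apply lt_0_INR; lia).
  unfold epi in *; cbn [fst snd] in *.
  assert (Hr : exists r, / INR (S n) * s < r /\ Defs.hypo phi (vscal X (/ INR (S n)) y, r)).
  { unfold Defs.hypo; cbn [fst snd Rbar_le Rbar_lt]. destruct (phi (vscal X (/ INR (S n)) y)); cbn [fst snd Rbar_le Rbar_lt] in N |- *.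
    - exists r. split; cbn [Rbar_le]; lra.
    - exists (/ INR (S n) * s + 1). split; [lra | exact I].
    - contradiction. }
  destruct Hr as [r [Hr Hh]].
  assert (A := nat_closed X _ HH _ _ Hh n).
  unfold Defs.hypo in A; cbn [fst snd Rbar_le Rbar_lt] in A.
  rewrite vscal_assoc, Rinv_r, vscal_1 in A by lra.
  assert (INR (S n) * r > s).
  { apply Rmult_lt_compat_l with (r := INR (S n)) in Hr; [|lra].
    rewrite <- Rmult_assoc, Rinv_r, Rmult_1_l in Hr by lra. lra. }
  destruct (phi y); cbn [fst snd Rbar_le Rbar_lt] in *; try tauto; lra.
Qed.

Lemma epi_rat (X : TVS) (phi : X -> Rbar) : add_closed (epi phi) -> add_closed (Defs.hypo phi) ->
  forall x t m n, epi phi (x, t) ->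
  epi phi (vscal X (INR (S m) / INR (S n)) x, INR (S m) / INR (S n) * t).
Proof.
  intros HE HH x t m n Hx.
  assert (A := nat_closed X _ HE _ _ Hx m).
  assert (B := epi_div X phi HH _ _ n A).
  rewrite vscal_assoc in B.
  replace (INR (S m) / INR (S n)) with (/ INR (S n) * INR (S m)) by (unfold Rdiv; ring).
  replace (/ INR (S n) * INR (S m) * t) with (/ INR (S n) * (INR (S m) * t)) by ring.
  exact B.
Qed.

Lemma epi_pos (X : TVS) (phi : X -> Rbar) : Rbar_continuous phi ->
  add_closed (epi phi) -> add_closed (Defs.hypo phi) ->
  forall x t l, 0 < l -> epi phi (x, t) -> epi phi (vscal X l x, l * t).
Proof.
  intros Hc HE HH x t l Hl Hx. apply NNPP; intro N. apply Rbar_not_le in N.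
  unfold epi in N; cbn [fst snd Rbar_le Rbar_lt] in N.
  assert (Ha : exists a, l * t < a /\ Rbar_lt (Fin a) (phi (vscal X l x))).
  { destruct (phi (vscal X l x)); cbn [fst snd Rbar_le Rbar_lt] in N |- *.
    - exists ((l * t + r) / 2). split; lra.
    - exists (l * t + 1). split; [lra | exact I].
    - contradiction. }
  destruct Ha as [a [Ha1 Ha2]].
  destruct (vscal_cont X l x _ (proj1 (Hc a)) Ha2) as [d [W [Hd [HW [Wx Hb]]]]].
  set (eps := Rmin d ((a - l * t) / (Rabs t + 1))).
  assert (Ht0 : 0 <= Rabs t) by apply Rabs_pos.
  assert (He : 0 < eps).
  { unfold eps. apply Rmin_glb_lt; [lra|]. apply Rdiv_lt_0_compat; lra. }
  destruct (archimed_cor1 eps He) as [NN [HN1 HN2]].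
  destruct NN as [|n]; [lia|].
  assert (HNp : 0 < INR (S n)) by (apply lt_0_INR; lia).
  destruct (archimed (l * INR (S n))) as [U1 U2].
  assert (Hz : (0 <= up (l * INR (S n)))%Z).
  { apply le_IZR. assert (0 < l * INR (S n)) by (apply Rmult_lt_0_compat; lra). lra. }
  destruct (IZN _ Hz) as [m Hm].
  rewrite Hm, <- INR_IZR_INZ in U1, U2.
  destruct m as [|m].
  { change (INR 0) with 0 in U1. assert (0 < l * INR (S n)) by (apply Rmult_lt_0_compat; lra). lra. }
  set (q := INR (S m) / INR (S n)).
  assert (Hq1 : l < q).
  { unfold q. apply Rmult_lt_reg_r with (INR (S n)); [lra|].
    unfold Rdiv. rewrite Rmult_assoc, Rinv_l, Rmult_1_r by lra. lra. }
  assert (Hq2 : q - l <= / INR (S n)).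
  { unfold q. apply Rmult_le_reg_r with (INR (S n)); [lra|].
    unfold Rdiv. rewrite Rmult_minus_distr_r, Rmult_assoc, Rinv_l, Rmult_1_r by lra. lra. }
  assert (Hqe : q - l < eps) by lra.
  assert (Hd' : eps <= d) by apply Rmin_l.
  assert (He2 : eps <= (a - l * t) / (Rabs t + 1)) by apply Rmin_r.
  assert (Hqt : q * t < a).
  { assert (E1 : (q - l) * (Rabs t + 1) < a - l * t).
    { apply Rlt_le_trans with (eps * (Rabs t + 1)).
      - apply Rmult_lt_compat_r; lra.
      - apply Rle_trans with ((a - l*t) / (Rabs t + 1) * (Rabs t + 1)).
        + apply Rmult_le_compat_r; lra.
        + unfold Rdiv. rewrite Rmult_assoc, Rinv_l, Rmult_1_r by lra. lra. }
    assert (E2 : (q - l) * t <= (q - l) * Rabs t).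
    { apply Rmult_le_compat_l; [lra | apply RRle_abs]. }
    nra. }
  assert (Hu := Hb q x ltac:(rewrite Rabs_right; lra) Wx).
  assert (Hr := epi_rat X phi HE HH x t m n Hx).
  unfold epi in Hr; cbn [fst snd Rbar_le Rbar_lt] in Hr. fold q in Hr.
  destruct (phi (vscal X q x)); cbn [fst snd Rbar_le Rbar_lt] in *; try tauto; lra.
Qed.

Lemma epi_scal (X : TVS) (phi : X -> Rbar) : Rbar_continuous phi ->
  add_closed (epi phi) -> add_closed (Defs.hypo phi) -> phi (vzero X) = Fin 0 ->
  forall x t l, 0 <= l -> epi phi (x, t) -> epi phi (vscal X l x, l * t).
Proof.
  intros Hc HE HH H0 x t l Hl Hx. destruct Hl as [Hl|Hl].
  - apply epi_pos; assumption.
  - subst l. unfold epi; simpl. rewrite vscal_0r, H0; simpl. lra.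
Qed.

Lemma add_convex (X : TVS) (phi : X -> Rbar) : Rbar_continuous phi ->
  add_closed (epi phi) -> add_closed (Defs.hypo phi) -> phi (vzero X) = Fin 0 ->
  convex (epi phi).
Proof.
  intros Hc HE HH H0 x1 t1 x2 t2 l E1 E2 Hl.
  apply HE; apply epi_scal; auto; lra.
Qed.

Definition Rbar_opp (a : Rbar) : Rbar :=
  match a with Fin r => Fin (- r) | PInf => NInf | NInf => PInf end.

Lemma transfer_add (X : TVS) (S T : X * R -> Prop) :
  (forall x t, S (x, t) <-> T (x, - t)) -> add_closed T -> add_closed S.
Proof.
  intros E HT x1 t1 x2 t2 A B. apply E. apply E in A. apply E in B.
  replace (- (t1 + t2)) with (- t1 + - t2) by ring. apply HT; assumption.
Qed.

Lemma transfer_convex (X : TVS) (S T : X * R -> Prop) :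
  (forall x t, S (x, t) <-> T (x, - t)) -> convex T -> convex S.
Proof.
  intros E HT x1 t1 x2 t2 l A B Hl. apply E. apply E in A. apply E in B.
  replace (- (l * t1 + (1 - l) * t2)) with (l * - t1 + (1 - l) * - t2) by ring.
  apply HT; assumption.
Qed.

Lemma sym_iff (X : TVS) (S T : X * R -> Prop) :
  (forall x t, S (x, t) <-> T (x, - t)) -> (forall x t, T (x, t) <-> S (x, - t)).
Proof. intros E x t. rewrite E, Ropp_involutive. tauto. Qed.

Section Neg.
Variable X : TVS.
Variable phi : X -> Rbar.
Let psi := fun x => Rbar_opp (phi x).

Lemma epi_psi : forall x t, epi psi (x, t) <-> Defs.hypo phi (x, - t).
Proof. intros x t. unfold epi, Defs.hypo, psi; simpl. destruct (phi x); simpl; try tauto; lra. Qed.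

Lemma hypo_psi : forall x t, Defs.hypo psi (x, t) <-> epi phi (x, - t).
Proof. intros x t. unfold epi, Defs.hypo, psi; simpl. destruct (phi x); simpl; try tauto; lra. Qed.

Lemma cont_psi : Rbar_continuous phi -> Rbar_continuous psi.
Proof.
  intros Hc a. destruct (Hc (- a)) as [A B]. split.
  - replace (fun x => Rbar_lt (Fin a) (psi x)) with (fun x => Rbar_lt (phi x) (Fin (- a))).
    exact B. apply functional_extensionality; intro x. apply propositional_extensionality.
    unfold psi; destruct (phi x); simpl; try tauto; lra.
  - replace (fun x => Rbar_lt (psi x) (Fin a)) with (fun x => Rbar_lt (Fin (- a)) (phi x)).
    exact A. apply functional_extensionality; intro x. apply propositional_extensionality.
    unfold psi; destruct (phi x); simpl; try tauto; lra.
Qed.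

Lemma zero_psi : phi (vzero X) = Fin 0 -> psi (vzero X) = Fin 0.
Proof. intros H. unfold psi. rewrite H. simpl. rewrite Ropp_0. reflexivity. Qed.
End Neg.

Theorem mainTheorem19 (X : TVS) (phi : X -> Rbar) :
  Rbar_continuous phi ->
  (Rbar_linear phi <-> Rbar_additive phi /\ phi (vzero X) = Fin 0).
Proof.
  intros Hc. set (psi := fun x => Rbar_opp (phi x)).
  assert (Ep := epi_psi X phi). assert (Hp := hypo_psi X phi).
  fold psi in Ep, Hp.
  split.
  - intros [HE [HH H0]]. split; [split|exact H0].
    + apply lin_add; assumption.
    + assert (A : add_closed (epi psi)).
      { apply lin_add.
        - exact (transfer_convex X _ _ Ep HH).
        - exact (transfer_convex X _ _ Hp HE).
        - exact (zero_psi X phi H0). }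
      exact (transfer_add X _ _ (sym_iff X _ _ Ep) A).
  - intros [[HE HH] H0]. split; [|split; [|exact H0]].
    + apply add_convex; assumption.
    + assert (A : convex (epi psi)).
      { apply add_convex.
        - exact (cont_psi X phi Hc).
        - exact (transfer_add X _ _ Ep HH).
        - exact (transfer_add X _ _ Hp HE).
        - exact (zero_psi X phi H0). }
      exact (transfer_convex X _ _ (sym_iff X _ _ Ep) A).
Qed.
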